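(* For $n\ge1$, let $P_n$ be the number of pairs $(T,p)$ with $T$ a rooted tree on vertex set $[n]$ and $p$ a prime parking function on $T$, and let $\mathcal{SRP}_n$ be the set of standardized restricted prime parking functions on $n$ vertices. Then \[ P_n=n!\,|\mathcal{SRP}_n|. \]
   Context: A rooted tree on $[n]$ has its edges oriented towards the root; the edge $u\to v$ is written $(u,v)$. For $p\in[n]^n$, drivers $1,\dots,n$ arrive in order; driver $i$ parks at $p_i$ if unoccupied, otherwise follows the directed path towards the root and parks at the first unoccupied vertex, leaving if none exists. $(T,p)$ is a parking function if all drivers park. $T_v$ is the set of vertices with a directed path to $v$ (including $v$); $(T,p)$ is prime if $|T_v|<|\{i:p_i\in T_v\}|$ for every non-root $v$. An edge is crossed/used by a driver if she crosses it after failing to park at her preferred vertex. An ordered (plane) tree is a rooted tree in which the children of each vertex are linearly ordered (left to right). Post-order labeling of an ordered tree with $n$ vertices assigns labels $1,\dots,n$ so that each vertex is labeled after all vertices in the subtrees of its children, and the subtrees of children are labeled from left to right (i.e. the standard post-order traversal). A pair $(\mathcal T,p)$ with $\mathcal T$ an ordered tree with $|\mathcal T|=n$ and $p\in[n]^n$ is a standardized restricted prime parking function if: (1) $(\mathcal T,p)$ is a prime parking function when $\mathcal T$ is regarded as an unordered rooted tree; (2) for any two siblings $u,v$ with parent $w$, $v$ is ordered to the right of $u$ if and only if the edge $(v,w)$ is crossed by some driver before the edge $(u,w)$ is first crossed during the parking procedure; (3) $\mathcal T$ is labeled by post-order. $\mathcal{SRP}_n$ is the set of all such pairs. *)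

(* Defs.v *)
From mathcomp Require Import all_boot.
Set Implicit Arguments. Unset Strict Implicit. Unset Printing Implicit Defensive.

(* Vertex set [n] is encoded as 'I_n (vertex k+1 of the paper is ordinal k);
   drivers 1..n are encoded as ordinals 0..n-1 of 'I_n.
   A rooted tree is encoded by its parent map par : vertex -> vertex, the
   edge v -> par v being the edge (v, par v) oriented towards the root, and
   par r = r for the root r. *)

Section Parking.
Variable n : nat.
Notation V := 'I_n.

Definition is_rtree (par : {ffun V -> V}) : bool :=
  [exists r : V, [forall v : V, iter n par v == r]].

Definition subtree (par : {ffun V -> V}) (v : V) : {set V} :=
  [set u : V | [exists k : 'I_n.+1, iter k par u == v]].

(* Vertex at which a driver arriving at v parks, given the occupied set occ
   (None if she leaves the tree).  Fuel n suffices for a tree. *)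
Fixpoint park_at (par : {ffun V -> V}) (occ : {set V}) (fuel : nat) (v : V)
  : option V :=
  match fuel with
  | 0 => None
  | S f => if v \notin occ then Some v
           else if par v == v then None
           else park_at par occ f (par v)
  end.

(* Lower endpoints x of the edges (x, par x) crossed by a driver arriving
   at v (edges crossed after failing to park). *)
Fixpoint crossed (par : {ffun V -> V}) (occ : {set V}) (fuel : nat) (v : V)
  : seq V :=
  match fuel with
  | 0 => [::]
  | S f => if v \notin occ then [::]
           else if par v == v then [::]
           else v :: crossed par occ f (par v)
  end.

Definition park_step (par : {ffun V -> V}) (occ : {set V}) (a : V) : {set V} :=
  match park_at par occ n a with Some v => v |: occ | None => occ end.

Definition occ_before (par p : {ffun V -> V}) (i : V) : {set V} :=
  foldl (park_step par) set0 (map p (filter (fun j : V => j < i) (enum V))).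

Definition is_parking (par p : {ffun V -> V}) : bool :=
  [forall i : V, park_at par (occ_before par p i) n (p i) != None].

Definition is_prime (par p : {ffun V -> V}) : bool :=
  [forall v : V, (par v != v) ==>
     (#|subtree par v| < #|[set i : V | p i \in subtree par v]|)].

(* Driver index of the first driver crossing the edge (u, par u);
   equals n if the edge is never crossed. *)
Definition first_cross (par p : {ffun V -> V}) (u : V) : nat :=
  find (fun i : V => u \in crossed par (occ_before par p i) n (p i)) (enum V).

(* Ordered tree labelled by post-order.  Children are ordered left to right
   according to their labels (this is forced by post-order labelling):
   every vertex has a larger label than all vertices of its subtree, and
   for siblings u left of v (u < v) the whole subtree of u is labelled
   before the whole subtree of v.  A rooted tree par satisfying this
   corresponds to exactly one ordered tree with its post-order labelling. *)
Definition is_postorder (par : {ffun V -> V}) : bool :=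
  [forall u : V, [forall v : V, (v \in subtree par u) ==> (v <= u)]] &&
  [forall u : V, [forall v : V,
     [&& u < v, par u == par v, par u != u & par v != v] ==>
     [forall x : V, [forall y : V,
        [&& x \in subtree par u & y \in subtree par v] ==> (x < y)]]]].

(* Condition (2): for siblings u, v (distinct non-root vertices with the
   same parent), v is to the right of u iff (v,w) is crossed by some driver
   before (u,w) is first crossed. *)
Definition is_restricted (par p : {ffun V -> V}) : bool :=
  [forall u : V, [forall v : V,
     [&& u != v, par u == par v, par u != u & par v != v] ==>
     ((u < v) == (first_cross par p v < first_cross par p u))]].

Definition P_count : nat :=
  #|[set tp : {ffun V -> V} * {ffun V -> V} |
      [&& is_rtree tp.1, is_parking tp.1 tp.2 & is_prime tp.1 tp.2]]|.

Definition SRP : {set {ffun V -> V} * {ffun V -> V}} :=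
  [set tp : {ffun V -> V} * {ffun V -> V} |
      [&& is_rtree tp.1, is_postorder tp.1,
          is_parking tp.1 tp.2, is_prime tp.1 tp.2 &
          is_restricted tp.1 tp.2]].

End Parking.

(* Main.v *)
Require Import Defs.
From mathcomp Require Import all_boot all_fingroup zify.
Set Implicit Arguments. Unset Strict Implicit. Unset Printing Implicit Defensive.


Section Tree.
Variable n : nat.
Notation V := 'I_n.
Variable par : {ffun V -> V}.
Hypothesis tree : is_rtree par.

Lemma iter_fix (r : V) k : par r = r -> iter k par r = r.
Proof. by move=> h; elim: k => //= k ->. Qed.

Lemma rootP : exists r : V, (forall v, iter n par v = r) /\ par r = r.
Proof.
case/existsP: tree => r /forallP h; exists r; split=> [v|]; first exact/eqP.
by have := eqP (h (par r)); rewrite -iterSr iterS (eqP (h r)).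
Qed.

Lemma iter_big (v : V) m : n <= m -> iter m par v = iter n par v.
Proof.
case: rootP => r [hr pr] le; rewrite -(subnK le) iterD hr iter_fix //.
Qed.

Lemma iter_period (w : V) k j : iter k.+1 par w = w -> iter (j * k.+1) par w = w.
Proof. by move=> h; elim: j => // j IH; rewrite mulSn iterD IH h. Qed.

Lemma acyclic (w : V) k : iter k.+1 par w = w -> par w = w.
Proof.
move=> h; case: rootP => r [hr pr].
have e : iter (n * k.+1) par w = w by apply: iter_period.
rewrite iter_big in e; last by rewrite leq_pmulr.
by rewrite -e hr.
Qed.

Lemma mem_subtree_iter (u w : V) k : iter k par u = w -> u \in subtree par w.
Proof.
move=> h; rewrite inE; apply/existsP.
case: (leqP k n) => hk.
  by exists (Ordinal (n:=n.+1) (m:=k) hk); rewrite /= h.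
exists (Ordinal (ltnSn n)) => /=; rewrite -(iter_big _ (ltnW hk)) h //.
Qed.

Lemma subtree_iter (u w : V) : u \in subtree par w -> exists k, iter k par u = w.
Proof. by rewrite inE => /existsP [k /eqP h]; exists k. Qed.

Lemma subtree_refl (u : V) : u \in subtree par u.
Proof. exact: (@mem_subtree_iter u u 0). Qed.

Lemma subtree_par (u w : V) : u \in subtree par w -> u != w -> par u \in subtree par w.
Proof.
move/subtree_iter=> [[|k] h] ne; first by rewrite -h eqxx in ne.
by apply: (@mem_subtree_iter _ _ k); rewrite -iterSr.
Qed.

Lemma subtree_trans (x u w : V) : x \in subtree par u -> u \in subtree par w -> x \in subtree par w.
Proof.
move=> /subtree_iter [k hk] /subtree_iter [j hj].
by apply: (@mem_subtree_iter _ _ (j + k)); rewrite iterD hk.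
Qed.

Fixpoint chain (w : V) (s : seq V) (u : V) : bool :=
  match s with
  | [::] => u == w
  | a :: s' => [&& par a == w, par a != a & chain a s' u]
  end.

Lemma chain_last w s u : chain w s u -> u = last w s.
Proof. by elim: s w => [w /eqP|a s IH w /and3P [_ _ /IH]]. Qed.

Lemma chain_rcons w s a u :
  chain w (rcons s a) u = [&& chain w s (par a), par a != a & u == a].
Proof.
elim: s w => [|b s IH] w /=; first by [].
by rewrite IH !andbA.
Qed.

Lemma chain_cat w s t x u : chain w s u -> chain u t x -> chain w (s ++ t) x.
Proof.
elim: s w => [w /= /eqP -> //|a s IH w /= /and3P [-> -> h] h2 /=].
exact: IH h h2.
Qed.

Lemma chain_subtree w s u : chain w s u -> u \in subtree par w.
Proof.
move=> h; apply: (@mem_subtree_iter _ _ (size s)).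
elim/last_ind: s u h => [u /eqP //|s a IH u].
rewrite chain_rcons => /and3P [h1 _ /eqP ->].
by rewrite size_rcons iterSr IH.
Qed.

Lemma iter_chain k (x w : V) : iter k par x = w -> exists s, chain w s x.
Proof.
elim: k x => [x <-|k IH x]; first by exists [::] => /=.
rewrite iterSr => /IH [s hs].
case: (eqVneq (par x) x) => [e|ne]; first by exists s; rewrite -e.
by exists (rcons s x); rewrite chain_rcons hs ne eqxx.
Qed.

Lemma subtree_chain (x w : V) : x \in subtree par w -> exists s, chain w s x.
Proof. by case/subtree_iter => k /iter_chain. Qed.

Lemma chain_uniq w s t u : chain w s u -> chain w t u -> s = t.
Proof.
elim/last_ind: s t u => [|s a IH] t u.
  move=> /= /eqP ->; elim/last_ind: t => // t b _.
  rewrite chain_rcons => /and3P [h ne /eqP eb]; subst b.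
  have := chain_subtree h => /subtree_iter [k hk].
  by move: (@acyclic w k); rewrite iterSr hk => /(_ erefl) e; rewrite e eqxx in ne.
rewrite chain_rcons => /and3P [h ne /eqP ea]; subst a.
elim/last_ind: t => [/= /eqP eu|t b _].
  subst w; have := chain_subtree h => /subtree_iter [k hk].
  by move: (@acyclic u k); rewrite iterSr hk => /(_ erefl) e; rewrite e eqxx in ne.
rewrite chain_rcons => /and3P [h' _ /eqP eb]; subst b.
by rewrite (IH _ _ h h').
Qed.


Fixpoint pth (f : nat) (v : V) : seq V :=
  match f with
  | 0 => [::]
  | f'.+1 => if par v == v then [::] else rcons (pth f' (par v)) v
  end.

Definition vpath (v : V) := pth n v.

Lemma pth_chain f (v r : V) : par r = r -> iter f par v = r -> chain r (pth f v) v.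
Proof.
move=> pr; elim: f v => [v /= ->|f IH v]; first by [].
rewrite iterSr /= => h.
case: (eqVneq (par v) v) => [e|ne] /=.
  by rewrite -h e iter_fix ?eqxx.
by rewrite chain_rcons IH // ne eqxx.
Qed.

Lemma path_chain : exists r, par r = r /\ forall v, chain r (vpath v) v.
Proof.
case: rootP => r [hr pr]; exists r; split=> // v.
exact: pth_chain.
Qed.

End Tree.

Fixpoint lexlt (s t : seq nat) : bool :=
  match s, t with
  | [::], [::] => false
  | [::], _ :: _ => true
  | _ :: _, [::] => false
  | x :: s', y :: t' => (x < y) || ((x == y) && lexlt s' t')
  end.

Lemma lexlt_irr s : lexlt s s = false.
Proof. by elim: s => //= x s ->; rewrite ltnn andbF. Qed.

Lemma lexlt_trans s t u : lexlt s t -> lexlt t u -> lexlt s u.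
Proof.
elim: s t u => [|x s IH] [|y t] [|z u] //=.
case/orP=> [lxy|/andP [/eqP exy hst]]; case/orP=> [lyz|/andP [/eqP eyz htu]].
- by rewrite (ltn_trans lxy lyz).
- by rewrite -eyz lxy.
- by rewrite exy lyz.
- by rewrite exy eyz eqxx (IH _ _ hst htu) orbT.
Qed.

Lemma lexlt_total s t : s != t -> lexlt s t || lexlt t s.
Proof.
elim: s t => [|x s IH] [|y t] //=.
case: (ltngtP x y) => // exy; subst y.
move=> ne; have /orP [h|h] : lexlt s t || lexlt t s by apply: IH; apply: contra ne => /eqP ->.
by rewrite h.
by rewrite h !orbT.
Qed.

Lemma lexlt_asym s t : lexlt s t -> lexlt t s = false.
Proof. by move=> h; apply/negbTE/negP => /(lexlt_trans h); rewrite lexlt_irr. Qed.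

Lemma lexlt_cat s t t' : lexlt (s ++ t) (s ++ t') = lexlt t t'.
Proof. by elim: s => //= x s ->; rewrite ltnn eqxx. Qed.

Section Keys.
Variable n : nat.
Notation V := 'I_n.
Variable par : {ffun V -> V}.
Hypothesis tree : is_rtree par.
Variable key : V -> nat.
Variable N : nat.
Hypothesis keyN : forall a, key a < N.

Definition K (v : V) : seq nat := rcons (map key (vpath par v)) N.

Lemma path_sub (x u : V) : x \in subtree par u -> exists q, chain par u q x /\ vpath par x = vpath par u ++ q.
Proof.
case: (path_chain tree) => r [pr hc] /subtree_chain [q hq].
exists q; split=> //; apply: (chain_uniq tree (hc x)).
exact: chain_cat (hc u) hq.
Qed.

Lemma path_child (u : V) : par u != u -> vpath par u = rcons (vpath par (par u)) u.
Proof.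
case: (path_chain tree) => r [pr hc] ne.
apply: (chain_uniq tree (hc u)); by rewrite chain_rcons hc ne eqxx.
Qed.

Lemma KA (x u : V) : x \in subtree par u -> K x = K u \/ lexlt (K x) (K u).
Proof.
case/path_sub => q [_ e]; rewrite /K e map_cat -!cats1 -catA lexlt_cat.
case: q {e} => [|a q] /=; first by left.
by right; rewrite keyN.
Qed.

Lemma KB (u v x y : V) : par u = par v -> par u != u -> par v != v -> key u < key v ->
  x \in subtree par u -> y \in subtree par v -> lexlt (K x) (K y).
Proof.
move=> e nu nv kuv /path_sub [q [_ hq]] /path_sub [q' [_ hq']].
rewrite /K hq hq' (path_child nu) (path_child nv) e !cat_rcons !map_cat !rcons_cat.
by rewrite lexlt_cat /= kuv.
Qed.

Lemma KC (u v : V) : par u = par v -> par u != u -> par v != v ->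
  lexlt (K u) (K v) = (key u < key v).
Proof.
move=> e nu nv.
rewrite /K (path_child nu) (path_child nv) e !map_rcons -!cats1 -!catA lexlt_cat /=.
by rewrite ltnn andbF /= andbF orbF.
Qed.

Hypothesis keyinj : forall a b, par a = par b -> par a != a -> par b != b -> key a = key b -> a = b.

Lemma chain_keys w s t (u v : V) : chain par w s u -> chain par w t v -> map key s = map key t -> s = t.
Proof.
elim: s w t => [|a s IH] w [|b t] //= .
move=> /and3P [/eqP pa na ha] /and3P [/eqP pb nb hb] [kab /IH].
have eab : a = b by apply: keyinj => //; rewrite pa pb.
by subst b => /(_ _ ha hb) ->.
Qed.

Lemma K_inj (u v : V) : K u = K v -> u = v.
Proof.
case: (path_chain tree) => r [pr hc].
move/rcons_inj => [] /(chain_keys (hc u) (hc v)) e.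
by rewrite (chain_last (hc u)) (chain_last (hc v)) e.
Qed.

Hypothesis P1 : forall x y : V, x \in subtree par y -> x <= y.
Hypothesis P2 : forall a b x y : V, par a = par b -> par a != a -> par b != b -> a < b ->
  x \in subtree par a -> y \in subtree par b -> x < y.
Hypothesis SK : forall a b : V, par a = par b -> par a != a -> par b != b -> a != b ->
  (a < b) = (key a < key b).

Lemma KE_chain w s t (u v : V) : chain par w s u -> chain par w t v ->
  lexlt (rcons (map key s) N) (rcons (map key t) N) -> u < v.
Proof.
elim: s w t => [|a s IH] w [|b t] /=.
- by move=> /eqP -> /eqP ->; rewrite ltnn andbF.
- move=> _ _; have kb := keyN b; rewrite ltnNge (ltnW kb) /=.
  by rewrite eq_sym (ltn_eqF kb).
- move=> /and3P [/eqP pa na ha] /eqP -> _.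
  have ua : u <= a. apply: P1. exact: (chain_subtree tree ha).
  have aw : a <= w by apply: P1; apply: (mem_subtree_iter tree (k:=1)); rewrite /= pa.
  have : a != w by rewrite -pa eq_sym.
  by move=> ne; apply: (leq_ltn_trans ua); rewrite ltn_neqAle ne aw.
- move=> /and3P [/eqP pa na ha] /and3P [/eqP pb nb hb].
  case/orP=> [kab|/andP [/eqP kab hl]].
    have ne : a != b by apply: contraTneq kab => ->; rewrite ltnn.
    have ab : a < b by rewrite SK // pa pb.
    apply: (P2 (a:=a) (b:=b)) => //; first by rewrite pa pb.
      exact: (chain_subtree tree ha).
    exact: (chain_subtree tree hb).
  have eab : a = b by apply: keyinj => //; rewrite pa pb.
  subst b; exact: IH ha hb hl.
Qed.

Lemma KE (u v : V) : lexlt (K u) (K v) -> u < v.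
Proof.
case: (path_chain tree) => r [pr hc]; exact: KE_chain (hc u) (hc v).
Qed.

End Keys.


Section Relabel.
Variable n : nat.
Notation V := 'I_n.
Implicit Types (s t : {perm V}) (par p : {ffun V -> V}) (occ : {set V}).

Definition relpar s par : {ffun V -> V} := [ffun v => s (par (s^-1%g v))].
Definition relp s p : {ffun V -> V} := [ffun i => s (p i)].

Lemma relparE s par v : relpar s par (s v) = s (par v).
Proof. by rewrite ffunE permK. Qed.

Lemma iter_rel s par k v : iter k (relpar s par) (s v) = s (iter k par v).
Proof. by elim: k => //= k ->; rewrite relparE. Qed.

Lemma rtree_rel s par : is_rtree par -> is_rtree (relpar s par).
Proof.
case/existsP=> r /forallP h; apply/existsP; exists (s r); apply/forallP => v.
by rewrite -(permKV s v) iter_rel (eqP (h _)).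
Qed.

Lemma subtree_rel s par v : subtree (relpar s par) (s v) = s @: subtree par v.
Proof.
apply/setP => x; rewrite -(permKV s x) mem_imset; last exact: perm_inj.
rewrite !inE; apply/existsP/existsP => [[k hk]|[k hk]]; exists k.
  by rewrite iter_rel (inj_eq perm_inj) in hk.
by rewrite iter_rel (inj_eq perm_inj).
Qed.

Lemma park_at_rel s par occ f v :
  park_at (relpar s par) (s @: occ) f (s v) = omap s (park_at par occ f v).
Proof.
elim: f v => //= f IH v.
rewrite mem_imset; last exact: perm_inj.
rewrite relparE (inj_eq perm_inj).
case: (v \in occ) => //=; case: (par v == v) => //=.
Qed.

Lemma crossed_rel s par occ f v :
  crossed (relpar s par) (s @: occ) f (s v) = map s (crossed par occ f v).
Proof.
elim: f v => //= f IH v.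
rewrite mem_imset; last exact: perm_inj.
rewrite relparE (inj_eq perm_inj).
by case: (v \in occ) => //=; case: (par v == v) => //=; rewrite IH.
Qed.

Lemma park_step_rel s par occ a :
  park_step (relpar s par) (s @: occ) (s a) = s @: park_step par occ a.
Proof.
rewrite /park_step park_at_rel; case: (park_at _ _ _ _) => //= v.
by rewrite imsetU1.
Qed.

Lemma occ_before_rel s par p i :
  occ_before (relpar s par) (relp s p) i = s @: occ_before par p i.
Proof.
rewrite /occ_before; set l := filter _ _.
rewrite -[set0 in LHS](imset0 s).
elim: l (set0 : {set V}) => //= j l IH occ.
by rewrite ffunE park_step_rel IH.
Qed.

Lemma parking_rel s par p : is_parking par p -> is_parking (relpar s par) (relp s p).
Proof.
move/forallP=> h; apply/forallP => i.
by rewrite occ_before_rel ffunE park_at_rel; case: (park_at _ _ _ _) (h i).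
Qed.

Lemma prime_rel s par p : is_prime par p -> is_prime (relpar s par) (relp s p).
Proof.
move/forallP=> h; apply/forallP => v; rewrite -(permKV s v).
set w := (s^-1)%g v; have := h w.
rewrite relparE (inj_eq perm_inj) subtree_rel card_imset; last exact: perm_inj.
congr (_ ==> (_ < _)); apply: eq_card => i; rewrite !inE ffunE mem_imset //.
  by rewrite inE.
exact: perm_inj.
Qed.

Lemma fc_rel s par p u :
  first_cross (relpar s par) (relp s p) (s u) = first_cross par p u.
Proof.
rewrite /first_cross; apply: eq_find => i /=.
by rewrite occ_before_rel ffunE crossed_rel mem_map //; exact: perm_inj.
Qed.

Lemma pth_rel s par f v : pth (relpar s par) f (s v) = map s (pth par f v).
Proof.
elim: f v => //= f IH v.
rewrite relparE (inj_eq perm_inj); case: (par v == v) => //.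
by rewrite IH map_rcons.
Qed.

Lemma path_rel s par v : vpath (relpar s par) (s v) = map s (vpath par v).
Proof. exact: pth_rel. Qed.

Lemma relparM s t par : relpar s (relpar t par) = relpar (t * s)%g par.
Proof. by apply/ffunP => v; rewrite !ffunE permM invMg permM. Qed.

Lemma relpM s t p : relp s (relp t p) = relp (t * s)%g p.
Proof. by apply/ffunP => v; rewrite !ffunE permM. Qed.

Lemma relpar1 par : relpar 1%g par = par.
Proof. by apply/ffunP => v; rewrite !ffunE invg1 !perm1. Qed.

Lemma relp1 p : relp 1%g p = p.
Proof. by apply/ffunP => v; rewrite !ffunE perm1. Qed.

Definition keyf par p (a : V) : nat := n - first_cross par p a.

Definition rank par p (v : V) : nat :=
  #|[set u | lexlt (K par (keyf par p) n.+1 u) (K par (keyf par p) n.+1 v)]|.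

Lemma K_rel s par p v :
  K (relpar s par) (keyf (relpar s par) (relp s p)) n.+1 (s v) = K par (keyf par p) n.+1 v.
Proof.
rewrite /K path_rel -map_comp; congr (rcons _ _); apply: eq_map => a /=.
by rewrite /keyf fc_rel.
Qed.

Lemma rank_rel s par p v : rank (relpar s par) (relp s p) (s v) = rank par p v.
Proof.
rewrite /rank K_rel.
rewrite -[RHS](card_imset _ (@perm_inj _ s)); apply: eq_card => x.
rewrite -(permKV s x) mem_imset; last exact: perm_inj.
by rewrite !inE K_rel.
Qed.

End Relabel.


Section Cross.
Variable n : nat.
Notation V := 'I_n.
Variable par : {ffun V -> V}.
Hypothesis tree : is_rtree par.
Implicit Types (occ : {set V}).

Lemma crossed_iter occ f (v x : V) : x \in crossed par occ f v ->
  exists j, x = iter j par v /\ par x != x.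
Proof.
elim: f v => //= f IH v.
case: (v \in occ) => //=; case: (eqVneq (par v) v) => //= ne.
rewrite inE => /orP [/eqP ->|/IH [j [-> h]]]; first by exists 0.
by exists j.+1; rewrite iterSr.
Qed.

Lemma sib_cross occ f (v a b : V) : a \in crossed par occ f v -> b \in crossed par occ f v ->
  par a = par b -> a = b.
Proof.
move=> /crossed_iter [i [ea na]] /crossed_iter [j [eb nb]].
wlog le : a b i j ea na eb nb / i <= j.
  move=> W e; case: (leqP i j) => h; first exact: (W a b i j).
  by symmetry; apply: (W b a j i) => //; exact: ltnW.
move=> e; have eb' : b = iter (j - i) par a by rewrite ea -iterD subnK.
case E : (j - i) eb' => [|m] eb''; first by rewrite eb''.
have h : iter m.+1 par (par a) = par a.
  by rewrite iterS -iterSr -eb'' e.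
have fw := acyclic tree h.
have : b = par a by rewrite eb'' iterSr iter_fix.
by move=> eb3; move: nb; rewrite eb3 fw eqxx.
Qed.

Lemma park_at_notin occ f (v x : V) : park_at par occ f v = Some x -> x \notin occ.
Proof.
elim: f v => //= f IH v.
case: ifP => [h [<-] //|_]; case: ifP => // _; exact: IH.
Qed.

Lemma park_walk occ f (v x a : V) : park_at par occ f v = Some x ->
  v \in subtree par a -> a \notin crossed par occ f v -> x \in subtree par a.
Proof.
elim: f v => //= f IH v.
case: ifP => [_ [<-] //|_]; case: ifP => // _ h va.
rewrite inE negb_or => /andP [ne na]; apply: IH h _ na.
by apply: (subtree_par tree) => //; rewrite eq_sym.
Qed.

Variable p : {ffun V -> V}.
Hypothesis parking : is_parking par p.
Hypothesis prime : is_prime par p.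

Definition O k : {set V} := foldl (park_step par) set0 (map p (take k (enum V))).

Lemma occ_before_O (i : V) : occ_before par p i = O i.
Proof.
rewrite /occ_before /O; congr (foldl _ _ (map p _)).
apply: (inj_map val_inj).
have mf : forall s : seq V, [seq \val j | j <- [seq j <- s | (j : V) < i]] = [seq m <- [seq \val j | j <- s] | m < i].
  by elim => //= a s IH; case: ifP => _ //=; rewrite IH.
rewrite mf val_enum_ord map_take val_enum_ord.
by rewrite take_iota (filter_iota_ltn 0 (ltnW (ltn_ord i))) (minn_idPl (ltnW (ltn_ord i))).
Qed.

Lemma park_step_sub occ a : occ \subset park_step par occ a.
Proof. rewrite /park_step; case: (park_at _ _ _ _) => // v; exact: subsetUr. Qed.

Lemma foldl_sub occ l : occ \subset foldl (park_step par) occ l.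
Proof.
elim: l occ => //= a l IH occ; apply: subset_trans (IH _); exact: park_step_sub.
Qed.

Lemma O_mono k j : k <= j -> O k \subset O j.
Proof.
move=> le; rewrite /O -(cat_take_drop k (take j (enum V))) (take_takel _ le) map_cat foldl_cat.
exact: foldl_sub.
Qed.

Definition spot (i : V) : V := odflt i (park_at par (occ_before par p i) n (p i)).

Lemma spotE (i : V) : park_at par (occ_before par p i) n (p i) = Some (spot i).
Proof.
move/forallP: parking => /(_ i); rewrite /spot.
by case: (park_at _ _ _ _).
Qed.

Lemma spot_notin (i : V) : spot i \notin occ_before par p i.
Proof. exact: park_at_notin (spotE i). Qed.

Lemma spot_in (i : V) : spot i \in O i.+1.
Proof.
rewrite /O (take_nth i); last by rewrite size_enum_ord.
rewrite map_rcons foldl_rcons nth_ord_enum -/(O i) -occ_before_O /park_step spotE.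
exact: setU11.
Qed.

Lemma spot_inj : injective spot.
Proof.
move=> i j e; apply/eqP; apply: contraT => ne.
wlog lt : i j e ne / i < j.
  move=> W; case: (ltngtP i j) => h; first exact: (W i j).
    by apply: (W j i) => //; rewrite eq_sym.
  by move: ne; rewrite (val_inj h) eqxx.
have : spot i \in occ_before par p j by rewrite occ_before_O; apply: (subsetP (O_mono lt)); exact: spot_in.
by rewrite e (negbTE (spot_notin j)).
Qed.

Lemma fc_le (a : V) : first_cross par p a <= n.
Proof. by have := find_size (fun i : V => a \in crossed par (occ_before par p i) n (p i)) (enum V); rewrite size_enum_ord. Qed.

Lemma fc_lt (a : V) : par a != a -> first_cross par p a < n.
Proof.
move=> na; rewrite ltnNge; apply/negP => h.
have hn : ~~ has (fun i : V => a \in crossed par (occ_before par p i) n (p i)) (enum V).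
  by rewrite has_find -/(first_cross par p a) size_enum_ord -leqNgt.
have sub : spot @: [set i | p i \in subtree par a] \subset subtree par a.
  apply/subsetP => x /imsetP [i]; rewrite inE => hi ->.
  apply: park_walk (spotE i) hi _.
  by move/hasPn: hn => /(_ i (mem_enum _ i)).
move/forallP: prime => /(_ a); rewrite na /= => lt.
by have := subset_leq_card sub; rewrite (card_imset _ spot_inj) leqNgt lt.
Qed.

Lemma fc_sib (a b : V) : par a = par b -> par a != a -> par b != b ->
  first_cross par p a = first_cross par p b -> a = b.
Proof.
move=> e na nb fe.
pose Pa := fun i : V => a \in crossed par (occ_before par p i) n (p i).
pose Pb := fun i : V => b \in crossed par (occ_before par p i) n (p i).
have ha : has Pa (enum V) by rewrite has_find size_enum_ord; exact: fc_lt na.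
have hb : has Pb (enum V) by rewrite has_find size_enum_ord; exact: fc_lt nb.
have := nth_find a ha; have := nth_find a hb.
rewrite /Pa /Pb -/(first_cross par p a) -/(first_cross par p b) -fe => hb' ha'.
exact: sib_cross ha' hb' e.
Qed.

End Cross.


Section Main.
Variable n : nat.
Notation V := 'I_n.

Lemma card_lt_ord (v : V) : #|[set u : V | u < v]| = v.
Proof.
have le : v <= n by exact: ltnW.
have -> : [set u : V | u < v] = [set widen_ord le i | i in 'I_v].
  apply/setP => x; rewrite inE; apply/idP/imsetP => [hx|[i _ ->]] /=.
    by exists (Ordinal hx) => //; apply: val_inj.
  exact: ltn_ord.
by rewrite card_imset ?card_ord // => i j /(congr1 val) /= /val_inj.
Qed.

Section Fixed.
Variables par p : {ffun V -> V}.
Hypothesis tree : is_rtree par.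

Notation key := (keyf par p).
Notation KK := (K par key n.+1).

Lemma keyN a : key a < n.+1.
Proof. by rewrite /keyf ltnS leq_subr. Qed.

Lemma fc_le' (a : V) : first_cross par p a <= n.
Proof. by have := find_size (fun i : V => a \in crossed par (occ_before par p i) n (p i)) (enum V); rewrite size_enum_ord. Qed.

Lemma key_lt a b : (key a < key b) = (first_cross par p b < first_cross par p a).
Proof. have := fc_le' a; have := fc_le' b; rewrite /keyf; move=> ha hb; apply/idP/idP; lia. Qed.

Hypothesis keyinj : forall a b, par a = par b -> par a != a -> par b != b -> key a = key b -> a = b.

Lemma rank_lt (v : V) : rank par p v < n.
Proof.
rewrite /rank.
have h : [set u | lexlt (KK u) (KK v)] \proper [set: V].
  rewrite properT; apply/negP => /eqP e.
  by have := in_setT v; rewrite -e inE lexlt_irr.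
by have := proper_card h; rewrite cardsT card_ord.
Qed.

Lemma rank_mono (u v : V) : lexlt (KK u) (KK v) -> rank par p u < rank par p v.
Proof.
move=> h; apply: proper_card; apply/properP; split.
  by apply/subsetP => x; rewrite !inE => /lexlt_trans; apply.
by exists u; rewrite !inE ?lexlt_irr.
Qed.

Lemma rank_ltE (u v : V) : (rank par p u < rank par p v) = lexlt (KK u) (KK v).
Proof.
apply/idP/idP; last exact: rank_mono.
move=> h; case: (eqVneq (KK u) (KK v)) => [e|ne].
  by move: h; rewrite (K_inj tree keyinj e) ltnn.
case/orP: (lexlt_total ne) => // /rank_mono h'.
by move: h; rewrite ltnNge (ltnW h').
Qed.

Lemma rank_inj : injective (fun v => Ordinal (rank_lt v)).
Proof.
move=> u v [] e; apply: (K_inj tree keyinj); apply/eqP; apply: contraT => ne.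
case/orP: (lexlt_total ne) => /rank_mono; by rewrite e ltnn.
Qed.

End Fixed.

Definition Pset := [set tp : {ffun V -> V} * {ffun V -> V} |
      [&& is_rtree tp.1, is_parking tp.1 tp.2 & is_prime tp.1 tp.2]].

Definition Phi (x : {perm V} * ({ffun V -> V} * {ffun V -> V})) :=
  (relpar x.1 x.2.1, relp x.1 x.2.2).


Lemma eq_sym_ne (a b : V) : a != b -> b != a.
Proof. by rewrite eq_sym. Qed.

Lemma keyinj_of (par p : {ffun V -> V}) :
  (forall a b : V, par a = par b -> par a != a -> par b != b -> a != b ->
     (a < b) = (keyf par p a < keyf par p b)) ->
  forall a b, par a = par b -> par a != a -> par b != b -> keyf par p a = keyf par p b -> a = b.
Proof.
move=> SK a b e na nb ke; apply/eqP; apply: contraT => ne.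
have h1 := SK a b e na nb ne; have h2 := SK b a (esym e) nb na (eq_sym_ne ne).
rewrite ke ltnn in h1; rewrite ke ltnn in h2.
by move: ne; rewrite neq_ltn h1 h2.
Qed.

Lemma rank_id (par p : {ffun V -> V}) : (par, p) \in SRP n -> forall v, rank par p v = v.
Proof.
rewrite inE /= => /and5P [tr /andP [/forallP po1 /forallP po2] pk pr /forallP rs].
have P1 : forall x y : V, x \in subtree par y -> x <= y.
  by move=> x y h; move/forallP: (po1 y) => /(_ x) /implyP; apply.
have P2 : forall a b x y : V, par a = par b -> par a != a -> par b != b -> a < b ->
    x \in subtree par a -> y \in subtree par b -> x < y.
  move=> a b x y e na nb ab hx hy.
  have na' : par b != a by rewrite -e.
  move/forallP: (po2 a) => /(_ b) /implyP; rewrite ab e eqxx na' nb => /(_ erefl).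
  by move/forallP => /(_ x) /forallP /(_ y) /implyP; rewrite hx hy; apply.
have SK : forall a b : V, par a = par b -> par a != a -> par b != b -> a != b ->
    (a < b) = (keyf par p a < keyf par p b).
  move=> a b e na nb ne; move/forallP: (rs a) => /(_ b) /implyP.
  have na' : par b != a by rewrite -e.
  by rewrite ne e eqxx na' nb (key_lt p tr) => /(_ erefl) /eqP.
have ki := keyinj_of SK.
move=> v; rewrite /rank -[RHS](card_lt_ord v); apply: eq_card => u; rewrite !inE.
apply/idP/idP; first exact: (KE tr (keyN par p) ki P1 P2 SK).
move=> uv; have ne : u != v by rewrite neq_ltn uv.
have nK : K par (keyf par p) n.+1 u != K par (keyf par p) n.+1 v.
  by apply: contra ne => /eqP /(K_inj tr ki) ->.
case/orP: (lexlt_total nK) => // /(KE tr (keyN par p) ki P1 P2 SK).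
by rewrite ltnNge (ltnW uv).
Qed.


Lemma rigid (t : {perm V}) (par p : {ffun V -> V}) : (par, p) \in SRP n ->
  (relpar t par, relp t p) \in SRP n -> t = 1%g.
Proof.
move=> h1 h2; apply/permP => v; rewrite perm1; apply: val_inj => /=.
by rewrite -(rank_id h2 (t v)) rank_rel (rank_id h1).
Qed.

Lemma fwd (s : {perm V}) (par p : {ffun V -> V}) : (par, p) \in Pset ->
  (relpar s par, relp s p) \in Pset.
Proof.
rewrite !inE /= => /and3P [tr pk pr].
by rewrite rtree_rel // parking_rel // prime_rel.
Qed.

Lemma SRP_sub (par p : {ffun V -> V}) : (par, p) \in SRP n -> (par, p) \in Pset.
Proof. by rewrite !inE /= => /and5P [-> _ -> -> _]. Qed.

Lemma permS (s : {perm V}) (x : V) : exists y, x = s y.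
Proof. by exists ((s^-1)%g x); rewrite permKV. Qed.

Lemma surj (par p : {ffun V -> V}) : (par, p) \in Pset ->
  exists s : {perm V}, (relpar s par, relp s p) \in SRP n.
Proof.
rewrite inE /= => /and3P [tr pk pr].
have ki : forall a b, par a = par b -> par a != a -> par b != b -> keyf par p a = keyf par p b -> a = b.
  move=> a b e na nb ke; apply: (fc_sib tr pk pr e na nb).
  move: ke; rewrite /keyf; have := fc_le' par p a; have := fc_le' par p b; lia.
pose s := perm (rank_inj tr ki).
have sE : forall v, val (s v) = rank par p v by move=> v; rewrite permE.
exists s; rewrite inE /=.
apply/and5P; split; first exact: rtree_rel; last first.
- apply/forallP => u'; apply/forallP => v'.
  have [u ->] := permS s u'; have [v ->] := permS s v'.
  rewrite !relparE !(inj_eq perm_inj) !fc_rel.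
  apply/implyP => /and4P [ne /eqP e nu nv].
  by rewrite !sE (rank_ltE tr ki) (KC tr _ _ e nu nv) (key_lt p tr).
- exact: prime_rel.
- exact: parking_rel.
apply/andP; split; apply/forallP => u'; apply/forallP => v'.
  have [u ->] := permS s u'; have [v ->] := permS s v'.
  rewrite subtree_rel mem_imset; last exact: perm_inj.
  apply/implyP => h; rewrite !sE.
  case: (KA tr (keyN par p) h) => [/(K_inj tr ki) -> //|/rank_mono].
  exact: ltnW.
have [u ->] := permS s u'; have [v ->] := permS s v'.
rewrite !relparE !(inj_eq perm_inj).
apply/implyP => /and4P [uv /eqP e nu nv].
apply/forallP => x'; apply/forallP => y'.
have [x ->] := permS s x'; have [y ->] := permS s y'.
rewrite !subtree_rel !mem_imset; try exact: perm_inj.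
apply/implyP => /andP [hx hy].
rewrite !sE (rank_ltE tr ki).
rewrite !sE (rank_ltE tr ki) (KC tr _ _ e nu nv) in uv.
exact: (KB tr _ e nu nv uv hx hy).
Qed.

End Main.


Theorem proposition4p2 (n : nat) : 0 < n ->
  P_count n = n`! * #|SRP n|.
Proof.
move=> _.
have -> : P_count n = #|Pset n| by [].
have E : Pset n = [set Phi x | x in setX [set: {perm 'I_n}] (SRP n)].
  apply/setP => [[par p]]; apply/idP/imsetP => [h|[[s [par' p']] hx ->]].
    case: (surj h) => s hs.
    exists ((s^-1)%g, (relpar s par, relp s p)); first by rewrite inE /= in_setT.
    by rewrite /Phi /= relparM relpM mulgV relpar1 relp1.
  case/setXP: hx => _ hx.
  by rewrite /Phi /=; apply: fwd; apply: SRP_sub.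
rewrite E card_in_imset ?cardsX ?cardsT ?card_Sn //.
move=> [s1 [par1 p1]] [s2 [par2 p2]] /setXP [_ h1] /setXP [_ h2] e.
have e2 : (relpar (s1 * s2^-1)%g par1, relp (s1 * s2^-1)%g p1) = (par2, p2).
  move: e; rewrite /Phi /= => [[e1 e2]].
  by rewrite -relparM -relpM e1 e2 relparM relpM mulgV relpar1 relp1.
have t1 : (s1 * s2^-1)%g = 1%g by apply: (rigid h1); rewrite e2.
have es : s1 = s2 by rewrite -(mulgVK s2 s1) t1 mul1g.
move: e2; rewrite t1 relpar1 relp1 => [[-> ->]].
by rewrite es.
Qed.
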